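(* Let $(\mathsf P,\mathcal O)$ be a semitopology. Then every topen set $T$ is contained in a unique maximal topen set (maximal with respect to subset inclusion among topen sets).
   Context: A semitopology is a pair $(\mathsf P,\mathcal O)$ where $\mathsf P$ is a set and $\mathcal O\subseteq\mathcal P(\mathsf P)$ contains $\varnothing$ and $\mathsf P$ and is closed under arbitrary unions. Write $X\between Y$ when $X\cap Y\neq\varnothing$. A set $T\subseteq\mathsf P$ is transitive when for all $O,O'\in\mathcal O$, $O\between T$ and $T\between O'$ imply $O\between O'$. A set is topen when it is nonempty, open, and transitive. *)

(* Defs.v *)
Set Implicit Arguments.

Definition pset (P : Type) := P -> Prop.

Definition subset {P : Type} (X Y : pset P) : Prop := forall x, X x -> Y x.

Definition between {P : Type} (X Y : pset P) : Prop := exists x, X x /\ Y x.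

Record semitopology (P : Type) (O : pset P -> Prop) : Prop := {
  (* O is a family of *sets*: it respects extensional equality of predicates *)
  st_ext   : forall X Y : pset P, (forall x, X x <-> Y x) -> O X -> O Y;
  st_empty : O (fun _ => False);
  st_full  : O (fun _ => True);
  st_union : forall (I : Type) (F : I -> pset P),
      (forall i, O (F i)) -> O (fun x => exists i, F i x)
}.

Definition transitive {P : Type} (O : pset P -> Prop) (T : pset P) : Prop :=
  forall U U' : pset P, O U -> O U' -> between U T -> between T U' -> between U U'.

Definition topen {P : Type} (O : pset P -> Prop) (T : pset P) : Prop :=
  (exists x, T x) /\ O T /\ transitive O T.

Definition maximal_topen {P : Type} (O : pset P -> Prop) (T : pset P) : Prop :=
  topen O T /\ forall T', topen O T' -> subset T T' -> subset T' T.

(* Main.v *)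
Require Import Defs.

Theorem corollary3p13 (P : Type) (O : pset P -> Prop) (HO : semitopology O)
  (T : pset P) (HT : topen O T) :
  exists M : pset P, (maximal_topen O M /\ subset T M) /\
    forall M' : pset P, maximal_topen O M' -> subset T M' ->
      forall x, M' x <-> M x.
Proof.
  destruct HT as [[t Ht] [OT TT]].
  set (M := fun x => exists T', (topen O T' /\ between T' T) /\ T' x).
  assert (TM : subset T M).
  { intros x Hx. exists T. split; [split|]; auto.
    split; [exists t; auto | split; auto]. exists t; auto. }
  assert (OM : O M).
  { apply (st_ext HO (fun x => exists i : {T' | topen O T' /\ between T' T}, proj1_sig i x)).
    - intro x; split.
      + intros [[T' H] Hx]. exists T'; auto.
      + intros [T' [H Hx]]. exists (exist _ T' H); auto.
    - apply (st_union HO). intros i. exact (proj1 (proj2 (proj1 (proj2_sig i)))). }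
  assert (topM : topen O M).
  { split; [exists t; auto|]. split; auto.
    intros U U' OU OU' [u [Uu [T1 [[[_ [OT1 TT1]] B1] T1u]]]]
      [v [[T2 [[[_ [OT2 TT2]] B2] T2v]] U'v]].
    apply (TT U U'); auto.
    - apply (TT1 U T); auto. exists u; auto.
    - apply (TT2 T U'); auto.
      + destruct B2 as [w [? ?]]; exists w; auto.
      + exists v; auto. }
  assert (maxM : maximal_topen O M).
  { split; auto. intros T' HT' Hs x Hx.
    exists T'. split; auto. split; auto. exists t; split; auto. }
  exists M. split; auto.
  intros M' [HM' maxM'] TM' x.
  assert (S1 : subset M' M).
  { intros y Hy. exists M'. split; auto. split; auto. exists t; auto. }
  split; [apply S1|]. apply (maxM' M topM S1).
Qed.
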